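(* Let $C$ be an $(n,k)$-code with generator matrix $G$ and let $A_1,\dots,A_\ell\subseteq[n]$. For all $B\subseteq\bar A_1\cup\dots\cup\bar A_\ell$, $\operatorname{rank}\mathcal H_{A_1,\dots,A_\ell}[G]\ge|B|+\operatorname{rank}\mathcal H_{A_1\setminus B,\dots,A_\ell\setminus B}[G|_{\bar B}]$, where in the second term the column index set is $[n]\setminus B$ (so complements are taken in $[n]\setminus B$).
   Context: For a $k\times N$ matrix $G$ with columns indexed by a set $U$, $A\subseteq U$, $G|_A$ is the submatrix of columns in $A$ and $\bar A=U\setminus A$. $\mathcal H_{A_1,\dots,A_\ell}[G]$ is the $(|U|+\ell k)\times\sum_i|\bar A_i|$ block matrix whose first block row is $(I_U|_{\bar A_1},\dots,I_U|_{\bar A_\ell})$ ($I_U$ the identity matrix indexed by $U$) and below which is the block-diagonal matrix $\operatorname{diag}(G|_{\bar A_1},\dots,G|_{\bar A_\ell})$. *)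

(* Defs.v *)
From HB Require Import structures.
From mathcomp Require Import all_boot all_order all_algebra all_field.
Set Implicit Arguments. Unset Strict Implicit. Unset Printing Implicit Defensive.
Import GRing.Theory.
Local Open Scope ring_scope.

(* Rank of a matrix whose rows and columns are indexed by arbitrary finite
   types (the ordering chosen by enum does not affect the rank). *)
Definition fmxrank (F : fieldType) (Rw Cl : finType) (f : Rw -> Cl -> F) : nat :=
  \rank (\matrix_(i < #|{: Rw}|, j < #|{: Cl}|) f (enum_val i) (enum_val j)).

(* Row index type of H_{A_1..A_l}[G] with column universe U :
   U (identity block)  +  l copies of the k rows of G. *)
Definition Hrow (n k l : nat) (U : {set 'I_n}) : finType :=
  ({x : 'I_n | x \in U} + ('I_l * 'I_k))%type.

Definition Hcol (n l : nat) (U : {set 'I_n}) (A : 'I_l -> {set 'I_n}) : finType :=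
  {p : 'I_l * 'I_n | (p.2 \in U) && (p.2 \notin A p.1)}.

(* Entries of H_{A_1,...,A_l}[G|_U]: first block row (I_U|_{bar A_1}, ...,
   I_U|_{bar A_l}), below it diag(G|_{bar A_1}, ..., G|_{bar A_l}),
   where complements are taken inside U. *)
Definition Hentry (F : fieldType) (n k l : nat) (G : 'M[F]_(k, n))
  (U : {set 'I_n}) (A : 'I_l -> {set 'I_n})
  (r : Hrow k l U) (c : Hcol U A) : F :=
  match r with
  | inl x => ((val x == (val c).2) : nat)%:R
  | inr (i, t) => if i == (val c).1 then G t (val c).2 else 0
  end.

Definition rankH (F : fieldType) (n k l : nat) (G : 'M[F]_(k, n))
  (U : {set 'I_n}) (A : 'I_l -> {set 'I_n}) : nat :=
  fmxrank (@Hentry F n k l G U A).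

(* Main.v *)
Require Import Defs.
From HB Require Import structures.
From mathcomp Require Import all_boot all_order all_algebra all_field.
Set Implicit Arguments. Unset Strict Implicit. Unset Printing Implicit Defensive.
Import GRing.Theory.
Local Open Scope ring_scope.

Lemma fmxrank_sub (F : fieldType) (Rw Cl : finType) (f : Rw -> Cl -> F) m p
  (r : 'I_m -> Rw) (c : 'I_p -> Cl) :
  (\rank (\matrix_(i, j) f (r i) (c j)) <= fmxrank f)%N.
Proof.
rewrite /fmxrank.
set M := \matrix_(i < #|{: Rw}|, j < #|{: Cl}|) f (enum_val i) (enum_val j).
have -> : \matrix_(i, j) f (r i) (c j) =
   mxsub (fun i => enum_rank (r i)) (fun j => enum_rank (c j)) M.
  by apply/matrixP => i j; rewrite !mxE !enum_rankK.
rewrite mxsubrc rowsubE; apply: leq_trans (mxrankM_maxr _ _) _.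
rewrite -[X in (X <= _)%N]mxrank_tr trmx_mxsub rowsubE.
by rewrite (leq_trans (mxrankM_maxr _ _)) // mxrank_tr.
Qed.


Theorem proposition3p13 (F : finFieldType) (n k l : nat) (G : 'M[F]_(k, n))
  (HG : \rank G = k) (A : 'I_l -> {set 'I_n}) (B : {set 'I_n})
  (HB : B \subset \bigcup_(i < l) ~: A i) :
  (rankH G setT A >= #|B| + rankH G (~: B) (fun i => A i :\: B))%N.
Proof.
set A2 := (fun i => A i :\: B).
pose R2 := Hrow k l (~: B).
pose C2 := Hcol (~: B) A2.
pose R1 := Hrow k l (setT : {set 'I_n}).
pose C1 := Hcol (setT : {set 'I_n}) A.
pose embR (x : R2) : R1 := match x with
  | inl y => inl (exist _ (val y) (in_setT (val y)))
  | inr p => inr p end.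
have embCP (y : C2) : ((val y).2 \in setT) && ((val y).2 \notin A (val y).1).
  case: y => [[i u]] /= /andP[uB]; rewrite in_setD negb_and negbK.
  by rewrite in_setC in uB; rewrite in_setT /=; case/orP=> // uB'; rewrite uB' in uB.
pose embC (y : C2) : C1 := exist _ (val y) (embCP y).
have [cB HcB] : exists cB : 'I_#|B| -> C1, forall j, (val (cB j)).2 = enum_val j.
  apply: (@fin_all_exists _ (fun=> C1) (fun j (y : C1) => (val y).2 = enum_val j)) => j.
  have : enum_val j \in \bigcup_(i < l) ~: A i by apply: (subsetP HB); apply: enum_valP.
  case/bigcupP => i _; rewrite in_setC => Hi.
  have P : ((i, enum_val j).2 \in setT) && ((i, enum_val j).2 \notin A (i, enum_val j).1).
    by rewrite in_setT.
  by exists (exist _ (i, enum_val j) P).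
pose r (i : 'I_(#|B| + #|{: R2}|)) : R1 := match split i with
  | inl j => inl (exist _ (enum_val j) (in_setT _))
  | inr j => embR (enum_val j) end.
pose c (i : 'I_(#|B| + #|{: C2}|)) : C1 := match split i with
  | inl j => cB j
  | inr j => embC (enum_val j) end.
pose M := \matrix_(i, j) Hentry G (r i) (c j).
pose Z := \matrix_(i < #|{: R2}|, j < #|{: C2}|)
   Hentry G (enum_val i) (enum_val j).
have sl m1 m2 (i : 'I_m1) : split (lshift m2 i) = inl i := unsplitK (inl i).
have sr m1 m2 (i : 'I_m2) : split (rshift m1 i) = inr i := unsplitK (inr i).
have Mul : ulsubmx M = 1%:M.
  apply/matrixP => i j; rewrite !mxE /r /c !sl /= HcB (inj_eq enum_val_inj).
  by [].
have Mur : ursubmx M = 0.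
  apply/matrixP => i j; rewrite !mxE /r /c sl sr /=.
  case: (enum_val j) => [[t u]] /= /andP[uB _].
  have := enum_valP i; case: eqP => // -> uB'.
  by rewrite in_setC uB' in uB.
have Mdr : drsubmx M = Z.
  apply/matrixP => i j; rewrite !mxE /r /c !sr /=.
  by case: (enum_val i) => [x|[s t]].
have HM : M = block_mx 1%:M 0 (dlsubmx M) Z by rewrite -Mul -Mur -Mdr submxK.
have H1 : (\rank M <= rankH G setT A)%N by apply: fmxrank_sub.
apply: leq_trans H1.
have -> : (#|B| + rankH G (~: B) A2)%N = \rank (block_mx (1%:M : 'M[F]_#|B|) 0 0 Z).
  by rewrite rank_diag_block_mx mxrank1.
have -> : block_mx (1%:M : 'M[F]_#|B|) 0 0 Z = block_mx 1%:M 0 (- dlsubmx M) 1%:M *m M.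
  rewrite {2}HM mulmx_block !mul1mx !mulmx0 !mul0mx !mulmx1 !addr0 add0r.
  by rewrite addNr.
exact: mxrankM_maxr.
Qed.
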